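(* Let $(l,k,b)$ be a suspension triplet for $(X_A,\sigma_A)$ and $c=l-k$. Then there is a bijective correspondence $\tau\mapsto\gamma_\tau$ between the primitive periodic orbits $\tau\in P_{orb}(S^{l,k}_{A,b},\phi_A)$ of the one-sided suspension and the periodic orbits $\gamma_\tau\in P_{orb}(X_A)$ of $(X_A,\sigma_A)$ such that $\ell(\tau)=\beta_{\gamma_\tau}(c)$, where for $\gamma=\{x,\sigma_A(x),\dots,\sigma_A^{p-1}(x)\}$ with $p$ the least period of $x$, $\beta_\gamma(c)=\sum_{i=0}^{p-1}c(\sigma_A^i(x))$.
   Context: Let $N>1$ and $A$ an irreducible $N\times N$ $\{0,1\}$-matrix which is not a permutation matrix. $X_A$ is the compact space of sequences $(x_n)_{n\in\mathbb N}$, $x_n\in\{1,\dots,N\}$, $A(x_n,x_{n+1})=1$, with $\sigma_A((x_n)_n)=(x_{n+1})_n$. $\mathbb Z_+$, $\mathbb R_+$ are nonnegative integers/reals. A periodic orbit of $(X_A,\sigma_A)$ is a set $\{x,\sigma_A(x),\dots,\sigma_A^{p-1}(x)\}$ where $\sigma_A^p(x)=x$ and $p\ge1$ is minimal; $P_{orb}(X_A)$ is the set of these. $H^A$ is the quotient of $C(X_A,\mathbb Z)$ by $\{u-u\circ\sigma_A\}$, $H^A_+$ the classes of $\mathbb Z_+$-valued continuous functions; $[f]\in H^A_+$ is an order unit if for every $[u]\in H^A$ some $n\in\mathbb N$ has $n[f]-[u]\in H^A_+$. A suspension triplet is $(l,k,b)$ with $l,k\in C(X_A,\mathbb R_+)$,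 $b\in C(X_A,\mathbb R)$ such that $c=l-k$ is integer-valued with $[c]$ an order unit, and $l-b$, $k-b\circ\sigma_A$ take values in $\mathbb Z_+$. $S^{l,k}_{A,b}$ is the quotient of $\{(x,r)\in X_A\times\mathbb R: r\ge b(x)\}$ by the equivalence relation generated by $(x,r)\sim(\sigma_A(x),r-c(x))$ whenever $r\ge l(x)$, with classes $[x,r]$ and flow $\phi_{A,t}([x,r])=[x,r+t]$, $t\in\mathbb R_+$. A (primitive) periodic orbit of this flow is a set $\tau=\{\phi_{A,t}(u):t\in\mathbb R_+\}$ for a point $u$ with $\phi_{A,T}(u)=u$ for some $T>0$; $P_{orb}(S^{l,k}_{A,b},\phi_A)$ is the set of these, and $\ell(\tau)=\min\{t>0:\phi_{A,t}(u)=u\}$ for any $u\in\tau$. *)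

(* Defs.v *)
From HB Require Import structures.
From mathcomp Require Import all_boot all_order all_algebra.
From mathcomp Require Import boolp classical_sets reals.
From Stdlib Require Import Relation_Operators.
Set Implicit Arguments. Unset Strict Implicit. Unset Printing Implicit Defensive.
Import Order.TTheory GRing.Theory Num.Theory.
Local Open Scope ring_scope.
Local Open Scope classical_set_scope.

Definition irreducible_mx (N : nat) (A : 'M[int]_N) : Prop :=
  forall i j : 'I_N, exists n : nat, 0 < (A ^+ n) i j.

Definition zero_one_mx (N : nat) (A : 'M[int]_N) : Prop :=
  forall i j, A i j = 0 \/ A i j = 1.

Definition XA (N : nat) (A : 'M[int]_N) : Type :=
  {x : nat -> 'I_N | forall n, A (x n) (x n.+1) = 1}.

Lemma shift_ok (N : nat) (A : 'M[int]_N) (x : XA A) :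
  forall n, A (proj1_sig x n.+1) (proj1_sig x n.+2) = 1.
Proof. by move=> n; case: x => f Hf /=; apply: Hf. Qed.

Definition sigmaA (N : nat) (A : 'M[int]_N) (x : XA A) : XA A :=
  exist _ (fun n => proj1_sig x n.+1) (@shift_ok N A x).

(* x and y agree on the first n coordinates (cylinder neighbourhoods,
   a base of the product topology of X_A) *)
Definition agree (N : nat) (A : 'M[int]_N) (n : nat) (x y : XA A) : Prop :=
  forall i, (i < n)%N -> proj1_sig x i = proj1_sig y i.

Definition contR (R : realType) (N : nat) (A : 'M[int]_N) (f : XA A -> R) : Prop :=
  forall (x : XA A) (e : R), 0 < e ->
    exists n, forall y, agree n x y -> `|f x - f y| < e.

Definition contZ (N : nat) (A : 'M[int]_N) (f : XA A -> int) : Prop :=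
  forall x : XA A, exists n, forall y, agree n x y -> f y = f x.

Definition coboundary (N : nat) (A : 'M[int]_N) (w : XA A -> int) : Prop :=
  exists u : XA A -> int, contZ u /\ forall x, w x = u x - u (sigmaA x).

(* [w] in H^A_+ : w is cohomologous to a Z_+-valued continuous function *)
Definition inHplus (N : nat) (A : 'M[int]_N) (w : XA A -> int) : Prop :=
  exists g : XA A -> int, contZ g /\ (forall x, 0 <= g x) /\
    coboundary (fun x => w x - g x).

Definition order_unit (N : nat) (A : 'M[int]_N) (f : XA A -> int) : Prop :=
  forall u : XA A -> int, contZ u ->
    exists n : nat, inHplus (fun x => f x *+ n - u x).

Definition suspension_triplet (R : realType) (N : nat) (A : 'M[int]_N)
    (l k b : XA A -> R) : Prop :=
  [/\ contR l /\ contR k /\ contR b,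
      (forall x, 0 <= l x) /\ (forall x, 0 <= k x),
      (exists cz : XA A -> int, contZ cz /\ order_unit cz /\
          forall x, l x - k x = (cz x)%:~R),
      (forall x, exists m : nat, l x - b x = m%:R)
    & (forall x, exists m : nat, k x - b (sigmaA x) = m%:R)].

Definition least_period (N : nat) (A : 'M[int]_N) (x : XA A) (p : nat) : Prop :=
  [/\ (0 < p)%N, iter p (@sigmaA N A) x = x &
      forall q, (0 < q)%N -> (q < p)%N -> iter q (@sigmaA N A) x <> x].

Definition orbit_set (N : nat) (A : 'M[int]_N) (x : XA A) (p : nat) : set (XA A) :=
  [set y | exists2 i, (i < p)%N & y = iter i (@sigmaA N A) x].

Definition is_porb (N : nat) (A : 'M[int]_N) (g : set (XA A)) : Prop :=
  exists x p, least_period x p /\ g = orbit_set x p.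

Definition beta (R : realType) (N : nat) (A : 'M[int]_N) (c : XA A -> R)
    (x : XA A) (p : nat) : R :=
  \sum_(i < p) c (iter i (@sigmaA N A) x).

Definition sdom (R : realType) (N : nat) (A : 'M[int]_N) (b : XA A -> R)
    (p : XA A * R) : Prop := b p.1 <= p.2.

Definition sstep (R : realType) (N : nat) (A : 'M[int]_N) (l k b : XA A -> R)
    (p q : XA A * R) : Prop :=
  [/\ sdom b p, l p.1 <= p.2 & q = (sigmaA p.1, p.2 - (l p.1 - k p.1))].

Definition sequiv (R : realType) (N : nat) (A : 'M[int]_N) (l k b : XA A -> R) :
    XA A * R -> XA A * R -> Prop :=
  clos_refl_sym_trans _ (sstep l k b).

Definition sclass (R : realType) (N : nat) (A : 'M[int]_N) (l k b : XA A -> R)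
    (p : XA A * R) : set (XA A * R) :=
  [set q | sequiv l k b p q].

(* the forward flow orbit {phi_t([x,r]) : t >= 0} = {[x,r+t] : t >= 0} *)
Definition sorbit (R : realType) (N : nat) (A : 'M[int]_N) (l k b : XA A -> R)
    (x : XA A) (r : R) : set (set (XA A * R)) :=
  [set C | exists2 t, 0 <= t & C = sclass l k b (x, r + t)].

Definition is_sporb (R : realType) (N : nat) (A : 'M[int]_N) (l k b : XA A -> R)
    (tau : set (set (XA A * R))) : Prop :=
  exists x r T, [/\ sdom b (x, r), 0 < T,
     sclass l k b (x, r + T) = sclass l k b (x, r) & tau = sorbit l k b x r].

Definition is_min_speriod (R : realType) (N : nat) (A : 'M[int]_N)
    (l k b : XA A -> R) (x : XA A) (r t : R) : Prop :=
  [/\ 0 < t, sclass l k b (x, r + t) = sclass l k b (x, r) &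
      forall s, 0 < s -> sclass l k b (x, r + s) = sclass l k b (x, r) -> t <= s].

(* Main.v *)
Require Import Defs.
From HB Require Import structures.
From mathcomp Require Import all_boot all_order all_algebra.
From mathcomp Require Import boolp classical_sets reals.
From Stdlib Require Import Relation_Operators.
From mathcomp Require Import ring lra zify.
Import Order.TTheory GRing.Theory Num.Theory.
Set Implicit Arguments. Unset Strict Implicit. Unset Printing Implicit Defensive.
Local Open Scope ring_scope.
Local Open Scope classical_set_scope.

Section Susp.
Variables (R : realType) (N : nat) (A : 'M[int]_N) (l k b : XA A -> R).

Local Notation sg := (@sigmaA N A).
Definition cc (x : XA A) : R := l x - k x.
Definition Ssum (n : nat) (x : XA A) : R := \sum_(j < n) cc (iter j sg x).
Definition gp (p : XA A * R) : XA A * R := (sg p.1, p.2 - cc p.1).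
Definition chain (n : nat) (p : XA A * R) : Prop :=
  forall j, (j < n)%N -> l (iter j gp p).1 <= (iter j gp p).2.
Definition reach (p q : XA A * R) : Prop :=
  exists n, chain n p /\ iter n gp p = q.
Definition meet (p q : XA A * R) : Prop :=
  exists w, reach p w /\ reach q w.

Lemma iter_comm a c x : iter a sg (iter c sg x) = iter c sg (iter a sg x).
Proof. by rewrite -!iterD addnC. Qed.

Lemma Ssum0 x : Ssum 0 x = 0.
Proof. by rewrite /Ssum big_ord0. Qed.

Lemma SsumS n x : Ssum n.+1 x = Ssum n x + cc (iter n sg x).
Proof. by rewrite /Ssum big_ord_recr. Qed.

Lemma SsumD n m x : Ssum (n + m)%N x = Ssum n x + Ssum m (iter n sg x).
Proof.
elim: m => [|m IH]; first by rewrite addn0 Ssum0 addr0.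
by rewrite addnS !SsumS IH [RHS]addrA [in LHS]addnC iterD.
Qed.

Lemma Ssum1 x : Ssum 1 x = cc x.
Proof. by rewrite SsumS Ssum0 add0r. Qed.

Lemma iter_gp n x r : iter n gp (x, r) = (iter n sg x, r - Ssum n x).
Proof.
elim: n => [|n IH]; first by rewrite /= Ssum0 subr0.
rewrite iterS IH /gp /= SsumS; congr pair; lra.
Qed.

Lemma Ssum_per p x : iter p sg x = x -> Ssum p (sg x) = Ssum p x.
Proof.
move=> Hp. have E1 := SsumD p 1 x. have E2 := SsumD 1 p x.
rewrite addnC in E2. rewrite E2 Hp !Ssum1 /= in E1. lra.
Qed.

Lemma Ssum_perj p x j : iter p sg x = x -> Ssum p (iter j sg x) = Ssum p x.
Proof.
move=> Hp; elim: j => [//|j IH].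
rewrite iterS Ssum_per // iter_comm Hp //.
Qed.

Lemma Ssum_mul p x q : iter p sg x = x -> Ssum (q * p)%N x = Ssum p x *+ q.
Proof.
move=> Hp; elim: q => [|q IH]; first by rewrite mul0n Ssum0.
by rewrite mulSn SsumD Hp IH mulrS.
Qed.

Lemma iter_mul p x q : iter p sg x = x -> iter (q * p)%N sg x = x.
Proof.
move=> Hp; elim: q => [//|q IH]; by rewrite mulSn iterD IH Hp.
Qed.

Lemma iter_mod p x n : iter p sg x = x -> iter n sg x = iter (n %% p) sg x.
Proof. by move=> Hp; rewrite {1}(divn_eq n p) addnC iterD iter_mul. Qed.


Lemma chainD a c p : chain (a + c)%N p <-> chain a p /\ chain c (iter a gp p).
Proof.
split.
- move=> H; split=> j Hj.
    by apply: H; apply: leq_trans (leq_addr _ _).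
  by rewrite -iterD addnC; apply: H; rewrite ltn_add2l.
- move=> [H1 H2] j Hj; case: (ltnP j a) => Hja; first exact: H1.
  have -> : j = (j - a + a)%N by rewrite subnK.
  rewrite iterD; apply: H2; rewrite ltn_subLR // addnC //.
Qed.

Lemma chain_le n m p : (n <= m)%N -> chain m p -> chain n p.
Proof. by move=> Hnm H j Hj; apply: H; apply: leq_trans Hnm. Qed.

Lemma chain_shift n x r u : 0 <= u -> chain n (x, r) -> chain n (x, r + u).
Proof.
move=> Hu H j Hj; have := H j Hj; rewrite !iter_gp /= => Hl; lra.
Qed.

Lemma chainS n p : chain n.+1 p <-> l p.1 <= p.2 /\ chain n (gp p).
Proof.
have := chainD 1 n p; rewrite add1n => ->.
split=> -[H1 H2]; split=> //.
- by have := H1 0%N isT.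
- by move=> j; rewrite ltnS leqn0 => /eqP ->.
Qed.

Lemma reach_refl p : reach p p.
Proof. by exists 0%N; split=> // j. Qed.

Lemma reach_trans p q s : reach p q -> reach q s -> reach p s.
Proof.
move=> [n [Hn <-]] [m [Hm <-]]; exists (n + m)%N; split.
  by apply/chainD.
by rewrite addnC iterD.
Qed.

Lemma reach_total p q s : reach p q -> reach p s -> reach q s \/ reach s q.
Proof.
move=> [n [Hn <-]] [m [Hm <-]]; case: (leqP n m) => Hnm.
- left; exists (m - n)%N; split.
    by move: Hm; rewrite -{1}(subnKC Hnm) => /chainD [].
  by rewrite -iterD subnK.
- right; have Hmn := ltnW Hnm; exists (n - m)%N; split.
    by move: Hn; rewrite -{1}(subnKC Hmn) => /chainD [].
  by rewrite -iterD subnK.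
Qed.

Lemma meet_refl p : meet p p.
Proof. by exists p; split; apply: reach_refl. Qed.

Lemma meet_sym p q : meet p q -> meet q p.
Proof. by move=> [w [H1 H2]]; exists w. Qed.

Lemma meet_trans p q s : meet p q -> meet q s -> meet p s.
Proof.
move=> [w1 [H1 H2]] [w2 [H3 H4]].
case: (reach_total H2 H3) => H.
- by exists w2; split=> //; apply: reach_trans H1 H.
- by exists w1; split=> //; apply: reach_trans H4 H.
Qed.

Lemma reach_meet p q : reach p q -> meet p q.
Proof. by move=> H; exists q; split=> //; apply: reach_refl. Qed.

Lemma reach_shift x r y s u : 0 <= u -> reach (x, r) (y, s) -> reach (x, r + u) (y, s + u).
Proof.
move=> Hu [n [Hn E]]; exists n; split; first exact: chain_shift.
move: E; rewrite !iter_gp => -[-> <-]; congr pair; lra.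
Qed.

Lemma meet_shift x r y s u : 0 <= u -> meet (x, r) (y, s) -> meet (x, r + u) (y, s + u).
Proof.
move=> Hu [[z t] [H1 H2]]; exists (z, t + u); split; exact: reach_shift.
Qed.

Hypothesis Hlb : forall x, b x <= l x.

Lemma sequiv_meet p q : sequiv l k b p q <-> meet p q.
Proof.
split.
- elim=> {p q} [p q [Hd Hl ->]| p | p q _ IH | p q s _ IH1 _ IH2].
  + apply: reach_meet; exists 1%N; split=> //.
    by move=> j; rewrite ltnS leqn0 => /eqP ->.
  + exact: meet_refl.
  + exact: meet_sym.
  + exact: meet_trans IH1 IH2.
- have Hr : forall p q, reach p q -> sequiv l k b p q.
    move=> {}p {}q [n [Hn <-]]; elim: n p Hn => [|n IH] p0 Hn.
      exact: rst_refl.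
    move/chainS: Hn => [H1 H2].
    rewrite iterSr; apply: (@rst_trans _ _ _ (gp p0)); last exact: IH.
    apply: rst_step; split=> //; rewrite /sdom; apply: le_trans H1; exact: Hlb.
  move=> [w [H1 H2]]; apply: (@rst_trans _ _ _ w); first exact: Hr.
  apply: rst_sym; exact: Hr.
Qed.

Lemma sclass_eq p q : sclass l k b p = sclass l k b q <-> meet p q.
Proof.
rewrite -sequiv_meet; split.
- move=> E; have : sclass l k b q q by apply: rst_refl.
  by rewrite -E.
- move=> H; apply/funext=> w; apply/propext; rewrite /sclass /=; split=> Hw.
    by apply: (@rst_trans _ _ _ p) Hw; apply: rst_sym.
  exact: (@rst_trans _ _ _ q) Hw.
Qed.


Lemma exists_lp z d : (0 < d)%N -> iter d sg z = z -> exists p, least_period z p.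
Proof.
move=> Hd Hz.
pose P := fun q => `[< (0 < q)%N /\ iter q sg z = z >].
have exP : exists q, P q by exists d; apply/asboolP.
case: (ex_minnP exP) => m /asboolP [Hm1 Hm2] Hmin.
exists m; split=> // q Hq Hqm Hqz.
have : (m <= q)%N by apply: Hmin; apply/asboolP.
by rewrite leqNgt Hqm.
Qed.

Lemma back_iter z p n : (0 < p)%N -> iter p sg z = z ->
  iter (p * n - n)%N sg (iter n sg z) = z.
Proof.
move=> Hp Hz; rewrite -iterD subnK; last by rewrite leq_pmull.
by rewrite mulnC iter_mul.
Qed.

Lemma lp_dvd z p d n : least_period z p -> iter d sg (iter n sg z) = iter n sg z ->
  exists q, d = (q * p)%N.
Proof.
move=> [Hp0 Hpz Hmin] Hd.
set y := iter n sg z in Hd.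
have Hpy : iter p sg y = y by rewrite /y iter_comm Hpz.
have Hdm : iter (d %% p) sg y = y by rewrite -iter_mod.
case: (posnP (d %% p)) => Hm.
  by exists (d %/ p)%N; rewrite {1}(divn_eq d p) Hm addn0.
exfalso; apply: (Hmin (d %% p)%N) => //; first exact: ltn_pmod.
rewrite -{1 2}(back_iter n Hp0 Hpz) iter_comm -/y.
by rewrite Hdm.
Qed.

Lemma orb_closed z p w p' a c : least_period z p -> (0 < p')%N -> iter p' sg w = w ->
  iter a sg w = iter c sg z -> exists2 i, (i < p)%N & w = iter i sg z.
Proof.
move=> [Hp0 Hpz _] Hp' Hw E.
exists ((p' * a - a + c) %% p)%N; first exact: ltn_pmod.
rewrite -iter_mod // iterD -E; by rewrite back_iter.
Qed.

Hypothesis Hpos : forall q z, (0 < q)%N -> iter q sg z = z -> 0 < Ssum q z.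

Lemma meet_period x p s T : least_period x p -> 0 < T -> meet (x, s) (x, s + T) ->
  exists q n, [/\ (0 < q)%N, T = Ssum p x *+ q, chain n (x, s),
     chain (n + q * p)%N (x, s + T) & iter n gp (x, s) = iter (n + q * p)%N gp (x, s + T)].
Proof.
move=> Hlp HT [w [[n1 [Hn1 E1]] [m [Hm E2]]]].
have E := E1; rewrite -E2 !iter_gp in E; case: E => Ex Es.
case: (ltnP m n1) => Hmn.
- exfalso.
  set d := (n1 - m)%N; set y := iter m sg x.
  have Hn1d : n1 = (m + d)%N by rewrite /d subnKC // ltnW.
  have Hd : (0 < d)%N by rewrite /d subn_gt0.
  have Hy : iter d sg y = y by rewrite /y -iterD addnC -Hn1d Ex.
  have := Hpos Hd Hy; rewrite Hn1d SsumD -/y in Es; lra.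
- set d := (m - n1)%N; set y := iter n1 sg x.
  have Hmd : m = (n1 + d)%N by rewrite /d subnKC.
  have Hy : iter d sg y = y by rewrite /y -iterD addnC -Hmd Ex.
  have [q Hq] := lp_dvd Hlp Hy.
  have HTd : T = Ssum d y by rewrite Hmd SsumD -/y in Es; lra.
  have Hpy : iter p sg y = y by case: Hlp => _ Hp _; rewrite /y iter_comm Hp.
  case: q Hq => [|q] Hq.
    by rewrite Hq mul0n Ssum0 in HTd; move: HT; rewrite HTd ltxx.
  exists q.+1, n1; split=> //.
  + by rewrite HTd Hq Ssum_mul // /y Ssum_perj //; case: Hlp.
  + by rewrite -Hq -Hmd.
  + by rewrite -Hq -Hmd E1 E2.
Qed.

Lemma min_period x p s : least_period x p ->
  (exists2 T, 0 < T & meet (x, s) (x, s + T)) ->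
  [/\ 0 < Ssum p x, meet (x, s) (x, s + Ssum p x) &
      forall T, 0 < T -> meet (x, s) (x, s + T) -> Ssum p x <= T].
Proof.
move=> Hlp [T HT HmT].
have Hbpos : 0 < Ssum p x by case: Hlp => Hp0 Hpx _; apply: Hpos.
split=> //.
- have [q [n [Hq0 HTq Hn Hc Heq]]] := meet_period Hlp HT HmT.
  case: q Hq0 HTq Hc Heq => [//|q] _ HTq Hc Heq.
  have Hpx : iter p sg x = x by case: Hlp.
  have Hsplit : (n + q.+1 * p = q * p + (n + p))%N.
    by rewrite mulSn addnA [(q * p + _)%N]addnC.
  have Hit : iter (q * p)%N gp (x, s + T) = (x, s + Ssum p x).
    rewrite iter_gp iter_mul // Ssum_mul // HTq mulrS; congr pair; lra.
  exists (iter n gp (x, s)); split; first by exists n.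
  exists (n + p)%N; split.
    by move: Hc; rewrite Hsplit => /chainD [_]; rewrite -Hit.
  by rewrite Heq Hsplit [(q * p + _)%N]addnC [in RHS]iterD Hit.
- move=> T' HT' Hm'.
  have [q [n [Hq0 HTq _ _ _]]] := meet_period Hlp HT' Hm'.
  case: q Hq0 HTq => [//|q] _ ->; rewrite mulrS lerDl; exact: mulrn_wge0 (ltW _).
Qed.


Lemma sum_intr q (F : nat -> int) : \sum_(j < q) (F j)%:~R = (\sum_(j < q) F j)%:~R :> R.
Proof.
elim: q => [|q IH]; first by rewrite !big_ord0.
by rewrite !big_ord_recr /= IH intrD.
Qed.

Lemma tele (u : XA A -> int) z q :
  \sum_(j < q) (u (iter j sg z) - u (iter j.+1 sg z)) = u z - u (iter q sg z).
Proof.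
elim: q => [|q IH]; first by rewrite big_ord0 subrr.
by rewrite big_ord_recr /= IH addrA subrK.
Qed.

Lemma Ssum_pos_of (cz : XA A -> int) : order_unit cz ->
  (forall x, l x - k x = (cz x)%:~R) ->
  forall q z, (0 < q)%N -> iter q sg z = z -> 0 < Ssum q z.
Proof.
move=> Hou Hcz q z Hq Hz.
have Hu1 : contZ (fun _ : XA A => 1 : int) by move=> x; exists 0%N.
have [n [g [_ [Hg0 [u0 [_ Hu0]]]]]] := Hou _ Hu1.
have Hs : \sum_(j < q) (cz (iter j sg z) *+ n - 1 - g (iter j sg z)) = 0.
  rewrite (eq_bigr (fun j : 'I_q => u0 (iter j sg z) - u0 (iter j.+1 sg z))).
    by rewrite tele Hz subrr.
  by move=> j _; rewrite Hu0.
rewrite !sumrB sumrMnl sumr_const card_ord in Hs.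
set Sc := \sum_(j < q) cz (iter j sg z) in Hs.
set Sg := \sum_(j < q) g (iter j sg z) in Hs.
have HSg : 0 <= Sg by apply: sumr_ge0 => j _; apply: Hg0.
have Hq1 : 0 < 1 *+ q :> int by rewrite ltr0n.
have HSn : 0 < Sc *+ n.
  have -> : Sc *+ n = 1 *+ q + Sg.
    by apply/eqP; rewrite -subr_eq0 opprD addrA Hs.
  exact: ltr_wpDr.
have Hn : (0 < n)%N by case: (posnP n) HSn => // ->; rewrite mulr0n ltxx.
rewrite pmulrn_lgt0 // in HSn.
rewrite /Ssum /cc (eq_bigr (fun j : 'I_q => (cz (iter j sg z))%:~R)); last by move=> j _; rewrite Hcz.
by rewrite (sum_intr q (fun j => cz (iter j sg z))) ltr0z.
Qed.


Lemma meet_eq x a y c a' c' : meet (x, a) (y, c) -> a = a' -> c = c' -> meet (x, a') (y, c').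
Proof. by move=> H <- <-. Qed.

Lemma chain_mono n x r r' : chain n (x, r) -> r <= r' -> chain n (x, r').
Proof.
move=> H Hr; have -> : r' = r + (r' - r) by lra.
by apply: chain_shift => //; rewrite subr_ge0.
Qed.

Lemma chain_big n x r : exists2 u, 0 <= u & chain n (x, r + u).
Proof.
elim: n => [|n [u0 Hu0 IH]]; first by exists 0 => // j.
pose v := Num.max u0 (l (iter n sg x) - r + Ssum n x).
have Hv1 : u0 <= v by rewrite le_max lexx.
have Hv2 : l (iter n sg x) - r + Ssum n x <= v by rewrite le_max lexx orbT.
exists v; first exact: le_trans Hv1.
move=> j; rewrite ltnS leq_eqVlt => /orP [/eqP ->|Hj].
  rewrite iter_gp /=; lra.
apply: (chain_mono IH) => //; lra.
Qed.

Lemma meet_fst y1 r1 y2 r2 : meet (y1, r1) (y2, r2) ->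
  exists a a', iter a sg y1 = iter a' sg y2.
Proof.
move=> [[w t] [[a [_ Ha]] [a' [_ Ha']]]]; exists a, a'.
by move: Ha Ha'; rewrite !iter_gp => -[-> _] [-> _].
Qed.

Lemma common w x z a a' e e' : iter a sg w = iter a' sg x -> iter e sg z = iter e' sg x ->
  exists a'' e'', iter a'' sg w = iter e'' sg z.
Proof.
move=> H1 H2; case: (leqP a' e') => H.
- exists (e' - a' + a)%N, e; rewrite iterD H1 -iterD subnK //.
- exists a, (a' - e' + e)%N; rewrite iterD H2 -iterD subnK // ltnW //.
Qed.

Lemma archi_T (T t : R) : 0 < T -> 0 <= t -> exists j, t <= T *+ j.
Proof.
move=> HT Ht.
have H0 : 0 <= t / T by apply: divr_ge0 => //; exact: ltW.
exists (Num.Def.archi_bound (t / T)); rewrite -mulr_natl.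
have := archi_boundP H0; rewrite ltr_pdivrMr // => /ltW.
by rewrite mulrC.
Qed.

Lemma per_mult x r T : 0 <= T -> meet (x, r) (x, r + T) ->
  forall j u, 0 <= u -> meet (x, r + u) (x, r + u + T *+ j).
Proof.
move=> HT H; elim=> [|j IH] u Hu; first by rewrite mulr0n addr0; apply: meet_refl.
apply: meet_trans (IH u Hu) _.
have Hj : 0 <= u + T *+ j by apply: addr_ge0 => //; exact: mulrn_wge0.
apply: meet_eq (meet_shift Hj H) _ _; rewrite ?mulrS; lra.
Qed.

Lemma per_tail x r T t T' : 0 < T -> meet (x, r) (x, r + T) -> 0 <= t -> 0 <= T' ->
  (meet (x, r + t) (x, r + t + T') <-> meet (x, r) (x, r + T')).
Proof.
move=> HT H Ht HT'; split=> H'.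
- have [j Hj] := archi_T HT Ht.
  have H1 := per_mult (ltW HT) H j (lexx 0); rewrite addr0 in H1.
  have Hw : 0 <= T *+ j - t by rewrite subr_ge0.
  have H2 := meet_shift Hw H'.
  have H3 := per_mult (ltW HT) H j HT'.
  apply: meet_trans H1 _; apply: meet_trans (meet_sym H3).
  apply: meet_eq H2 _ _; lra.
- apply: meet_eq (meet_shift Ht H') _ _; lra.
Qed.

Lemma sorbit_sub x1 r1 T1 x2 r2 t1 t2 : 0 < T1 -> meet (x1, r1) (x1, r1 + T1) ->
  0 <= t1 -> 0 <= t2 -> meet (x1, r1 + t1) (x2, r2 + t2) ->
  sorbit l k b x1 r1 `<=` sorbit l k b x2 r2.
Proof.
move=> HT H Ht1 Ht2 H12 C [u Hu ->].
have [j Hj] := archi_T HT Ht1.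
have Hw : 0 <= u + T1 *+ j - t1.
  have := mulrn_wge0 j (ltW HT); lra.
exists (t2 + (u + T1 *+ j - t1)); first exact: addr_ge0.
apply/sclass_eq.
apply: meet_trans (per_mult (ltW HT) H j Hu) _.
apply: meet_eq (meet_shift Hw H12) _ _; lra.
Qed.

Definition Fm (tau : set (set (XA A * R))) : set (XA A) :=
  [set w | (exists p, least_period w p) /\ exists s, tau (sclass l k b (w, s))].

Lemma Fm_orbit x r T z p s0 t0 : 0 < T -> meet (x, r) (x, r + T) ->
  least_period z p -> 0 <= t0 -> meet (z, s0) (x, r + t0) ->
  Fm (sorbit l k b x r) = orbit_set z p.
Proof.
move=> HT H Hlp Ht0 Hz.
apply/seteqP; split.
- move=> w [[p' Hp'] [s [t Ht /sclass_eq Hw]]].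
  have [a [a' E1]] := meet_fst Hw.
  have [e [e' E2]] := meet_fst Hz.
  have [a'' [e'' E]] := common E1 E2.
  by case: Hp' => Hp'0 Hp'w _; apply: orb_closed Hlp Hp'0 Hp'w E.
- move=> w [i Hi ->]; split.
    case: Hlp => Hp0 Hpz _; apply: (exists_lp Hp0).
    by rewrite iter_comm Hpz.
  have [u Hu Hc] := chain_big i z s0.
  exists (s0 + u - Ssum i z); exists (t0 + u); first exact: addr_ge0.
  apply/sclass_eq.
  have Hr : reach (z, s0 + u) (iter i sg z, s0 + u - Ssum i z).
    by exists i; split=> //; rewrite iter_gp.
  apply: meet_trans (meet_sym (reach_meet Hr)) _.
  apply: meet_eq (meet_shift Hu Hz) _ _; lra.
Qed.

Lemma per_exists x r T : 0 < T -> meet (x, r) (x, r + T) ->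
  exists z p s0, least_period z p /\ meet (z, s0) (x, r).
Proof.
move=> HT [[w t] [[n1 [Hn1 E1]] [m [Hm E2]]]].
have E := E1; rewrite -E2 !iter_gp in E; case: E => Ex Es.
case: (ltnP m n1) => Hmn.
- exfalso.
  set d := (n1 - m)%N; set y := iter m sg x.
  have Hn1d : n1 = (m + d)%N by rewrite /d subnKC // ltnW.
  have Hd : (0 < d)%N by rewrite /d subn_gt0.
  have Hy : iter d sg y = y by rewrite /y -iterD addnC -Hn1d Ex.
  have := Hpos Hd Hy; rewrite Hn1d SsumD -/y in Es; lra.
- case: (posnP (m - n1)%N) => Hd.
    have Hmn1 : m = n1 by apply/eqP; rewrite eqn_leq Hmn -subn_eq0 Hd.
    rewrite Hmn1 in Es; lra.
  set d := (m - n1)%N in Hd; set y := iter n1 sg x.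
  have Hmd : m = (n1 + d)%N by rewrite /d subnKC.
  have Hy : iter d sg y = y by rewrite /y -iterD addnC -Hmd Ex.
  have [p Hp] := exists_lp Hd Hy.
  exists y, p, (r - Ssum n1 x); split=> //.
  apply: meet_sym; apply: reach_meet; exists n1; split=> //.
  by rewrite iter_gp.
Qed.


Lemma per_transfer a ra c rc T' : meet (a, ra) (c, rc) -> 0 <= T' ->
  (meet (a, ra) (a, ra + T') <-> meet (c, rc) (c, rc + T')).
Proof.
move=> H HT; have H' := meet_shift HT H; split=> H2.
- exact: meet_trans (meet_sym H) (meet_trans H2 H').
- exact: meet_trans H (meet_trans H2 (meet_sym H')).
Qed.

Lemma sporb_meet x r T : sclass l k b (x, r + T) = sclass l k b (x, r) -> meet (x, r) (x, r + T).
Proof. by move/sclass_eq/meet_sym. Qed.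

Lemma main_sec : exists F : set (set (XA A * R)) -> set (XA A),
    [/\ (forall tau, is_sporb l k b tau -> is_porb (F tau)),
        (forall tau1 tau2, is_sporb l k b tau1 -> is_sporb l k b tau2 ->
            F tau1 = F tau2 -> tau1 = tau2),
        (forall g, is_porb g -> exists2 tau, is_sporb l k b tau & F tau = g)
      & (forall tau, is_sporb l k b tau ->
           forall (x : XA A) (p : nat), F tau x -> least_period x p ->
           forall (y : XA A) (r : R), sdom b (y, r) -> tau (sclass l k b (y, r)) ->
             is_min_speriod l k b y r (beta (fun z => l z - k z) x p))].
Proof.
have Hdata : forall tau, is_sporb l k b tau -> exists x r T z p s0,
    [/\ 0 < T, meet (x, r) (x, r + T), tau = sorbit l k b x r,
        least_period z p & meet (z, s0) (x, r + 0) /\ Fm tau = orbit_set z p].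
  move=> tau [x [r [T [Hd HT Hcl ->]]]].
  have Hm := sporb_meet Hcl.
  have [z [p [s0 [Hlp Hz]]]] := per_exists HT Hm.
  have Hz' : meet (z, s0) (x, r + 0) by rewrite addr0.
  exists x, r, T, z, p, s0; split=> //; split=> //.
  exact: Fm_orbit HT Hm Hlp (lexx 0) Hz'.
exists Fm; split.
- move=> tau /Hdata [x [r [T [z [p [s0 [_ _ _ Hlp [_ ->]]]]]]]].
  by exists z, p.
- move=> tau1 tau2 /Hdata [x1 [r1 [T1 [z1 [p1 [s1 [HT1 Hm1 -> Hlp1 [Hz1 HF1]]]]]]]].
  move=> /Hdata [x2 [r2 [T2 [z2 [p2 [s2 [HT2 Hm2 -> Hlp2 [Hz2 HF2]]]]]]]] EF.
  have Hz1in : Fm (sorbit l k b x2 r2) z1.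
    by rewrite -EF HF1; exists 0%N => //; case: Hlp1.
  case: Hz1in => _ [s3 [t3 Ht3 /sclass_eq Hz3]].
  have [t1 [t2 [Ht1 Ht2 H12]]] : exists t1 t2, [/\ 0 <= t1, 0 <= t2 &
      meet (x1, r1 + t1) (x2, r2 + t2)].
    case: (lerP s1 s3) => Hs.
    + exists (s3 - s1), t3; split=> //; first by rewrite subr_ge0.
      apply: meet_trans Hz3; apply: meet_sym.
      have Hs' : 0 <= s3 - s1 by rewrite subr_ge0.
      apply: meet_eq (meet_shift Hs' Hz1) _ _; lra.
    + exists 0, (t3 + (s1 - s3)); split=> //.
        by apply: addr_ge0 => //; rewrite subr_ge0 ltW.
      have Hs' : 0 <= s1 - s3 by rewrite subr_ge0 ltW.
      apply: meet_trans (meet_sym Hz1) _.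
      apply: meet_eq (meet_shift Hs' Hz3) _ _; lra.
  apply/seteqP; split.
    exact: sorbit_sub HT1 Hm1 Ht1 Ht2 H12.
  exact: sorbit_sub HT2 Hm2 Ht2 Ht1 (meet_sym H12).
- move=> g [z [p [Hlp ->]]].
  have [u Hu Hc] := chain_big p z (b z).
  set s := b z + u.
  have Hb : 0 < Ssum p z by case: Hlp => Hp0 Hpz _; apply: Hpos.
  have Hc' : chain p (z, s + Ssum p z) by apply: (chain_mono Hc); rewrite lerDl ltW.
  have Hm : meet (z, s) (z, s + Ssum p z).
    apply: meet_sym; apply: reach_meet; exists p; split=> //.
    rewrite iter_gp; case: Hlp => _ -> _; congr pair; lra.
  exists (sorbit l k b z s).
    exists z, s, (Ssum p z); split=> //.
      by rewrite /sdom /s /=; lra.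
    by apply/sclass_eq; apply: meet_sym.
  apply: Fm_orbit Hb Hm Hlp (lexx 0) _.
  by rewrite addr0; apply: meet_refl.
- move=> tau [x [r [T [Hd HT Hcl ->]]]] x0 p0.
  rewrite /Fm /= => -[_ [s0 [t0 Ht0 /sclass_eq M0]]] Hlp0 y ry Hdy [t1 Ht1 /sclass_eq M1].
  have Hm := sporb_meet Hcl.
  have Htr : forall T', 0 <= T' ->
      (meet (y, ry) (y, ry + T') <-> meet (x0, s0) (x0, s0 + T')).
    move=> T' HT'.
    rewrite (per_transfer M1 HT') (per_tail HT Hm Ht1 HT').
    by rewrite -(per_tail HT Hm Ht0 HT') -(per_transfer M0 HT').
  have Hper0 : exists2 T, 0 < T & meet (x0, s0) (x0, s0 + T).
    by exists T => //; rewrite -Htr ?ltW // (per_transfer M1 (ltW HT)) (per_tail HT Hm Ht1 (ltW HT)).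
  have [Hb Hmb Hmin] := min_period Hlp0 Hper0.
  change (is_min_speriod l k b y ry (Ssum p0 x0)). 
  split=> //.
    by apply/sclass_eq; apply: meet_sym; rewrite Htr ?ltW.
  move=> s' Hs' /sclass_eq/meet_sym Hm'.
  by apply: Hmin => //; rewrite -Htr ?ltW.
Qed.

End Susp.

Theorem lemma4p1 (R : realType) (N : nat) (A : 'M[int]_N)
    (HN : (1 < N)%N) (H01 : zero_one_mx A) (Hirr : irreducible_mx A)
    (Hnp : ~~ is_perm_mx A)
    (l k b : XA A -> R) (Htrip : suspension_triplet l k b) :
  exists F : set (set (XA A * R)) -> set (XA A),
    [/\ (forall tau, is_sporb l k b tau -> is_porb (F tau)),
        (forall tau1 tau2, is_sporb l k b tau1 -> is_sporb l k b tau2 ->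
            F tau1 = F tau2 -> tau1 = tau2),
        (forall g, is_porb g -> exists2 tau, is_sporb l k b tau & F tau = g)
      & (forall tau, is_sporb l k b tau ->
           forall (x : XA A) (p : nat), F tau x -> least_period x p ->
           forall (y : XA A) (r : R), sdom b (y, r) -> tau (sclass l k b (y, r)) ->
             is_min_speriod l k b y r (beta (fun z => l z - k z) x p))].
Proof.
case: Htrip => _ _ [cz [_ [Hou Hcz]]] Hlb' _.
have Hlb : forall x, b x <= l x.
  by move=> x; have [m Hm] := Hlb' x; have := ler0n R m; lra.
have Hpos := Ssum_pos_of Hou Hcz.
exact: main_sec Hlb Hpos.
Qed.
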